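(* Let $k$ be a difference field of characteristic $0$ and $R=k\{y_1,\ldots,y_n\}$ the difference polynomial ring over $k$. Let $S\subseteq \mathbb{N}[x]^n$ and let $I=\langle \mathbf{y}^{\mathbf{u}}:\mathbf{u}\in S\rangle$ be the well-mixed closure of the set of monomials $\{\mathbf{y}^{\mathbf{u}}:\mathbf{u}\in S\}$. Then $I$ is generated by a finite set of monomials as a well-mixed $\sigma$-ideal, i.e. there is a finite set $F$ of monomials of $R$ with $I=\langle F\rangle$.
   Context: A difference field (σ-field) is a field $k$ with a ring endomorphism $\sigma:k\to k$. The difference polynomial ring $R=k\{y_1,\ldots,y_n\}$ is the polynomial ring over $k$ in the infinitely many variables $\sigma^j(y_i)$ ($1\le i\le n$, $j\ge 0$), with $\sigma$ extended by $\sigma(\sigma^j(y_i))=\sigma^{j+1}(y_i)$. Symbolic exponents: for $p=\sum_{i=0}^s c_ix^i\in\mathbb{N}[x]$ and $a\in R$, $a^p=\prod_{i=0}^s(\sigma^i(a))^{c_i}$. For $\mathbf{u}=(u_1,\ldots,u_n)\in\mathbb{N}[x]^n$, the monomial $\mathbf{y}^{\mathbf{u}}$ is $y_1^{u_1}\cdots y_n^{u_n}$. A $\sigma$-ideal is an ideal $I$ with $\sigma(I)\subseteq I$; it is well-mixed if $ab\in I$ implies $a\sigma(b)\in I$ for all $a,b\in R$. For $F\subseteq R$, $\langle F\rangle$ denotes the smallest well-mixed $\sigma$-ideal containing $F$. *)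

(* Defs.v *)
From HB Require Import structures.
From mathcomp Require Import all_boot all_order all_algebra.
From mathcomp Require Import finmap.
From mathcomp.multinomials Require Import monalg.

Set Implicit Arguments.
Unset Strict Implicit.
Unset Printing Implicit Defensive.

Import GRing.Theory.
Local Open Scope ring_scope.

(* The difference polynomial ring k{y_1,...,y_n}: the polynomial ring over k
   in the variables sigma^j(y_i), indexed by (i, j) : 'I_n * nat. *)
Notation dpoly k n := {malg k[{cmonom ('I_n * nat)%type}]}.

Definition dvar (k : fieldType) (n : nat) (i : 'I_n) (j : nat) : dpoly k n :=
  << ucm (i, j) >>.

Definition dsigma (k : fieldType) (n : nat) (s : {rmorphism k -> k})
  (p : dpoly k n) : dpoly k n :=
  mmap (fun c : k => (s c)%:MP : dpoly k n)
       (fun m : {cmonom ('I_n * nat)%type} =>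
          \prod_(x <- finsupp m) (dvar k x.1 x.2.+1) ^+ (m x)) p.

(* symbolic exponent a^p for p = sum_i c_i x^i in N[x] *)
Definition sexp (k : fieldType) (n : nat) (s : {rmorphism k -> k})
  (a : dpoly k n) (p : {poly nat}) : dpoly k n :=
  \prod_(i < size p) (iter i (dsigma s) a) ^+ (nth 0%N (polyseq p) i).

Definition dmonomial (k : fieldType) (n : nat) (s : {rmorphism k -> k})
  (u : 'I_n -> {poly nat}) : dpoly k n :=
  \prod_(i < n) sexp s (dvar k i 0) (u i).

Definition is_dmonomial (k : fieldType) (n : nat) (s : {rmorphism k -> k})
  (a : dpoly k n) : Prop :=
  exists u : 'I_n -> {poly nat}, a = dmonomial s u.

Definition is_ideal (k : fieldType) (n : nat) (I : dpoly k n -> Prop) : Prop :=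
  [/\ I 0,
      (forall a b, I a -> I b -> I (a + b)) &
      (forall r a, I a -> I (r * a))].

Definition is_wm_sigma_ideal (k : fieldType) (n : nat) (s : {rmorphism k -> k})
  (I : dpoly k n -> Prop) : Prop :=
  [/\ is_ideal I,
      (forall a, I a -> I (dsigma s a)) &
      (forall a b, I (a * b) -> I (a * dsigma s b))].

Definition wm_closure (k : fieldType) (n : nat) (s : {rmorphism k -> k})
  (F : dpoly k n -> Prop) : dpoly k n -> Prop :=
  fun a => forall I, is_wm_sigma_ideal s I -> (forall f, F f -> I f) -> I a.

(* Main.v *)
From Stdlib Require Import Classical ClassicalEpsilon.
Require Import Defs.
From HB Require Import structures.
From mathcomp Require Import all_boot all_order all_algebra.
From mathcomp Require Import finmap.
From mathcomp.multinomials Require Import monalg.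
Import GRing.Theory.
Set Implicit Arguments. Unset Strict Implicit.

Definition wqo (T : Type) (R : T -> T -> Prop) :=
  forall f : nat -> T, exists i j, (i < j)%N /\ R (f i) (f j).
Definition trans_rel (T : Type) (R : T -> T -> Prop) :=
  forall a b c, R a b -> R b c -> R a c.

Lemma wqo_nat : wqo (fun a b : nat => (a <= b)%N).
Proof.
suff H : forall m (f : nat -> nat), (f 0 <= m)%N ->
  exists i j, (i < j)%N /\ (f i <= f j)%N by move=> f; exact: (H (f 0)).
elim=> [|m IH] f Hf.
  by exists 0, 1; split => //; move: Hf; rewrite leqn0 => /eqP ->.
case: (leqP (f 0) (f 1)) => H01; first by exists 0, 1.
have H1 : (f 1 <= m)%N by rewrite -ltnS (leq_trans H01 Hf).
have [i [j [Hij Hr]]] := IH (fun k => f k.+1) H1.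
by exists i.+1, j.+1.
Qed.

Lemma wqo_pullback (T U : Type) (R : U -> U -> Prop) (g : T -> U) :
  wqo R -> wqo (fun a b => R (g a) (g b)).
Proof. by move=> H f; apply: (H (fun k => g (f k))). Qed.

Lemma wqo_fin (T : finType) : wqo (fun a b : T => a = b).
Proof.
move=> f.
pose h := fun i : 'I_#|T|.+1 => f i.
have : ~~ injectiveb h.
  apply/negP => /injectiveP Hi; have := leq_card _ Hi.
  by rewrite card_ord ltnn.
case/injectivePn => x [y Hxy Hh].
case: (ltngtP x y) => H.
- by exists x, y.
- by exists y, x.
- by move: Hxy; rewrite (val_inj H) eqxx.
Qed.

Lemma wqo_chain (T : Type) (R : T -> T -> Prop) : wqo R ->
  forall f : nat -> T, exists phi : nat -> nat,
    (forall i, (phi i < phi i.+1)%N) /\ forall i, R (f (phi i)) (f (phi i.+1)).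
Proof.
move=> HR f.
have [N HN] : exists N, forall i, (N <= i)%N -> exists j, (i < j)%N /\ R (f i) (f j).
  apply: NNPP => Hn.
  have Ht : forall N, exists i, (N <= i)%N /\ forall j, (i < j)%N -> ~ R (f i) (f j).
    move=> N; apply: NNPP => HN; apply: Hn; exists N => i Hi.
    apply: NNPP => Hj; apply: HN; exists i; split => // j Hij HRj.
    by apply: Hj; exists j.
  pose h := fun N => proj1_sig (constructive_indefinite_description _ (Ht N)).
  have hP : forall N, (N <= h N)%N /\ forall j, (h N < j)%N -> ~ R (f (h N)) (f j).
    by move=> M; rewrite /h; case: constructive_indefinite_description.
  pose g := fix g k := if k is k'.+1 then h (g k').+1 else h 0.
  have gmon : forall i j, (i < j)%N -> (g i < g j)%N.
    have gS : forall k, (g k < g k.+1)%N.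
      by move=> k; have [H _] := hP (g k).+1; exact: H.
    move=> i j; elim: j => // j IH; rewrite ltnS leq_eqVlt => /orP [/eqP ->|Hij].
      exact: gS.
    exact: (ltn_trans (IH Hij) (gS j)).
  have [i [j [Hij Hr]]] := HR (fun k => f (g k)).
  have Hterm : forall k, forall j, (g k < j)%N -> ~ R (f (g k)) (f j).
    by case=> [|k] /=; [apply: (hP 0).2 | apply: (hP (g k).+1).2].
  by apply: (Hterm i (g j) (gmon _ _ Hij)).
have Hex : forall i, exists j, (N <= i)%N -> (i < j)%N /\ R (f i) (f j).
  move=> i; case: (boolP (N <= i)%N) => Hi.
    by case: (HN i Hi) => j Hj; exists j.
  by exists 0.
pose nx := fun i => proj1_sig (constructive_indefinite_description _ (Hex i)).
have nxP : forall i, (N <= i)%N -> (i < nx i)%N /\ R (f i) (f (nx i)).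
  by move=> i; rewrite /nx; case: constructive_indefinite_description.
pose phi := fun k => iter k nx N.
have phiN : forall k, (N <= phi k)%N.
  elim=> [|k IH] //=; exact: (leq_trans IH (ltnW (nxP _ IH).1)).
exists phi; split => i; by case: (nxP _ (phiN i)).
Qed.

Lemma wqo_and (T : Type) (R1 R2 : T -> T -> Prop) :
  wqo R1 -> trans_rel R1 -> wqo R2 -> wqo (fun a b => R1 a b /\ R2 a b).
Proof.
move=> H1 T1 H2 f.
have [phi [Hm Hc]] := wqo_chain H1 f.
have [i [j [Hij Hr]]] := H2 (fun k => f (phi k)).
have mono : forall d, (phi i < phi (i + d).+1)%N /\ R1 (f (phi i)) (f (phi (i + d).+1)).
  elim=> [|d [IHm IHr]]; first by rewrite addn0.
  rewrite addnS; split; first exact: ltn_trans IHm (Hm _).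
  exact: T1 IHr (Hc _).
exists (phi i), (phi j); have := mono (j - i.+1).
by rewrite -addSn addnC subnK //; case.
Qed.

Lemma wqo_true (T : Type) : wqo (fun _ _ : T => True).
Proof. by move=> f; exists 0, 1. Qed.

Lemma wqo_all (I : eqType) (T : Type) (R : I -> T -> T -> Prop) (l : seq I) :
  (forall i, wqo (R i)) -> (forall i, trans_rel (R i)) ->
  wqo (fun a b => forall i, i \in l -> R i a b).
Proof.
move=> HW HT; elim: l => [|x l IH].
  by move=> f; exists 0, 1.
have := wqo_and (HW x) (HT x) IH.
move=> H f; have [i [j [Hij [Hx Hl]]]] := H f; exists i, j; split => //.
by move=> y; rewrite in_cons => /orP [/eqP ->|Hy] //; apply: Hl.
Qed.

Lemma trans_all (I T : Type) (R : I -> T -> T -> Prop) (P : I -> Prop) :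
  (forall i, trans_rel (R i)) -> trans_rel (fun a b => forall i, P i -> R i a b).
Proof. by move=> HT a b c H1 H2 i Hi; apply: HT (H1 i Hi) (H2 i Hi). Qed.

Definition cs (p : seq nat) (t : nat) : nat := \sum_(t <= j < size p) nth 0 p j.

Lemma cs_big p t : (size p <= t)%N -> cs p t = 0.
Proof. by move=> H; rewrite /cs big_geq. Qed.

Lemma cs_mono p t1 t2 : (t1 <= t2)%N -> (cs p t2 <= cs p t1)%N.
Proof.
move=> H; case: (leqP t2 (size p)) => H2.
  by rewrite /cs (big_cat_nat H H2) /= leq_addl.
by rewrite cs_big // ltnW.
Qed.

Lemma ee_ex t0 b p : exists k, (cs p (t0 + k) <= b)%N.
Proof. by exists (size p); rewrite cs_big // leq_addl. Qed.

Definition ee t0 b p := ex_minn (ee_ex t0 b p).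

Lemma ee_spec t0 b p : (cs p (t0 + ee t0 b p) <= b)%N /\
  forall k, (cs p (t0 + k) <= b)%N -> (ee t0 b p <= k)%N.
Proof. by rewrite /ee; case: ex_minnP. Qed.

Lemma Q_implies t0 B a q : (cs a t0 <= B)%N ->
  (forall t, (t < t0)%N -> (cs a t <= cs q t)%N) ->
  (forall b, (b < B)%N -> (ee t0 b a <= ee t0 b q)%N) ->
  forall t, (cs a t <= cs q t)%N.
Proof.
move=> HB H1 H2 t; case: (ltnP t t0) => Ht; first exact: H1.
case Hv: (cs a t) => [|b] //.
have HbB : (b < B)%N by rewrite -Hv; apply: leq_trans HB; exact: cs_mono.
have Et : t = t0 + (t - t0) by rewrite subnKC.
have Ha : (t - t0 < ee t0 b a)%N.
  rewrite ltnNge; apply/negP => Hle.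
  have [Hs _] := ee_spec t0 b a.
  have Hle' : (t0 + ee t0 b a <= t)%N by rewrite Et leq_add2l.
  have := leq_trans (cs_mono a Hle') Hs.
  by rewrite Hv ltnn.
have Hq : (b < cs q t)%N.
  rewrite ltnNge; apply/negP => Hle.
  have [_ Hm] := ee_spec t0 b q.
  rewrite Et in Hle; have := leq_trans (H2 _ HbB) (Hm _ Hle).
  by rewrite leqNgt Ha.
by [].
Qed.

Lemma trans_and (T : Type) (R1 R2 : T -> T -> Prop) :
  trans_rel R1 -> trans_rel R2 -> trans_rel (fun a b => R1 a b /\ R2 a b).
Proof. by move=> H1 H2 a b c [? ?] [? ?]; split; [apply: H1 | apply: H2]; eauto. Qed.

Definition Qrel t0 B (a q : seq nat) :=
  (forall t, t \in iota 0 t0 -> (cs a t <= cs q t)%N) /\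
  (forall b, b \in iota 0 B -> (ee t0 b a <= ee t0 b q)%N).

Lemma wqo_leq_pb (T : Type) (g : T -> nat) : wqo (fun a b => (g a <= g b)%N).
Proof. exact: (wqo_pullback g wqo_nat). Qed.

Lemma trans_leq_pb (T : Type) (g : T -> nat) : trans_rel (fun a b => (g a <= g b)%N).
Proof. by move=> a b c; apply: leq_trans. Qed.

Lemma wqo_Qrel t0 B : wqo (Qrel t0 B).
Proof.
apply: wqo_and.
- apply: (wqo_all (R := fun t a q => (cs a t <= cs q t)%N)) => i.
    exact: wqo_leq_pb. exact: trans_leq_pb.
- apply: trans_all => i; exact: trans_leq_pb.
- apply: (wqo_all (R := fun b a q => (ee t0 b a <= ee t0 b q)%N)) => i.
    exact: wqo_leq_pb. exact: trans_leq_pb.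
Qed.

Lemma trans_Qrel t0 B : trans_rel (Qrel t0 B).
Proof.
apply: trans_and; apply: trans_all => i; exact: trans_leq_pb.
Qed.

Definition Rp (a q : seq nat) := forall t, (cs a t <= cs q t)%N.

Lemma trans_Rp : trans_rel Rp.
Proof. by move=> a b c H1 H2 t; apply: leq_trans (H1 t) (H2 t). Qed.

Lemma wqo_Rp : wqo Rp.
Proof.
move=> f.
case: (classic (exists m, (0 < m)%N /\ Rp (f 0) (f m))) => [[m [Hm HR]]|Hn].
  by exists 0, m.
pose N0 := size (f 0); pose B := cs (f 0) 0.
pose cls := fun a => [pick t : 'I_N0 | (cs a t < cs (f 0) t)%N].
pose Rbig := fun a q => cls a = cls q /\
  (forall t0, t0 \in iota 0 N0 -> Qrel t0 B a q).
have HW : wqo Rbig.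
  apply: wqo_and.
  - exact: (wqo_pullback cls (@wqo_fin _)).
  - by move=> a b c -> ->.
  - apply: wqo_all => i; [exact: wqo_Qrel | exact: trans_Qrel].
have [i [j [Hij [Hc HQ]]]] := HW (fun m => f m.+1).
exists i.+1, j.+1; split => //.
have [t Ht] : exists t, (cs (f i.+1) t < cs (f 0) t)%N.
  apply: NNPP => Hne; apply: Hn; exists i.+1; split => // t.
  by rewrite leqNgt; apply/negP => Hlt; apply: Hne; exists t.
have HtN : (t < N0)%N.
  rewrite ltnNge; apply/negP => Hle; move: Ht; by rewrite (cs_big Hle).
have [t0 Ht0 Hcls] : exists2 t0 : 'I_N0, (cs (f i.+1) t0 < cs (f 0) t0)%N &
   cls (f i.+1) = Some t0.
  rewrite /cls; case: pickP => [t0 Ht0|Hnone]; first by exists t0.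
  by have := Hnone (Ordinal HtN); rewrite /= Ht.
have Hmt0 : nat_of_ord t0 \in iota 0 N0 by rewrite mem_iota add0n ltn_ord.
have [Q1 Q2] := HQ t0 Hmt0.
apply: (Q_implies (t0 := t0) (B := B)).
- apply: ltnW; apply: leq_trans Ht0 _; exact: cs_mono.
- by move=> t' Ht'; apply: Q1; rewrite mem_iota add0n.
- by move=> b Hb; apply: Q2; rewrite mem_iota add0n.
Qed.

Lemma wqo_basis (T : Type) (R : T -> T -> Prop) (d : T) : wqo R ->
  forall S : T -> Prop, exists l : seq T,
    (forall u, List.In u l -> S u) /\ forall v, S v -> exists u, List.In u l /\ R u v.
Proof.
move=> HW S; apply: NNPP => Hn.
have Hex : forall l : seq T, exists v, (forall u, List.In u l -> S u) ->
    S v /\ forall u, List.In u l -> ~ R u v.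
  move=> l; case: (classic (forall u, List.In u l -> S u)) => Hl; last first.
    by exists d.
  apply: NNPP => Hne; apply: Hn; exists l; split => // v Sv.
  apply: NNPP => Hv; apply: Hne; exists v => _; split => // u Hu Ruv.
  by apply: Hv; exists u.
pose nx := fun l => proj1_sig (constructive_indefinite_description _ (Hex l)).
have nxP : forall l, (forall u, List.In u l -> S u) ->
    S (nx l) /\ forall u, List.In u l -> ~ R u (nx l).
  by move=> l; rewrite /nx; case: constructive_indefinite_description.
pose L := fix L k := if k is k'.+1 then nx (L k') :: L k' else [::].
have LS : forall k u, List.In u (L k) -> S u.
  elim=> [|k IH] u //= [<-|Hu]; last exact: IH.
  by case: (nxP _ IH).
have Lin : forall i j, (i < j)%N -> List.In (nx (L i)) (L j).
  move=> i; elim=> // j IH; rewrite ltnS leq_eqVlt => /orP [/eqP ->|Hij] /=.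
    by left.
  by right; apply: IH.
have [i [j [Hij HR]]] := HW (fun k => nx (L k)).
by have [_ Hb] := nxP _ (LS j); apply: (Hb _ (Lin _ _ Hij)).
Qed.

Local Open Scope ring_scope.

Lemma sum_pos_ex (F : nat -> nat) m N : (0 < \sum_(m <= j < N) F j)%N ->
  exists j, (m <= j < N)%N /\ (0 < F j)%N.
Proof.
move=> H; apply: NNPP => Hn; move: H; rewrite big_nat_cond big1 // => j /andP [Hj _].
apply/eqP; rewrite -leqn0 leqNgt; apply/negP => Hp; apply: Hn; by exists j.
Qed.

Lemma sum_zero_above (F : nat -> nat) t N :
  (forall j, (t <= j < N)%N -> F j = 0%N) -> (\sum_(t <= j < N) F j = 0)%N.
Proof. by move=> H; rewrite big_nat_cond big1 // => j /andP [Hj _]; apply: H. Qed.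

Lemma sum_delta e t N : (e < N)%N -> (\sum_(t <= j < N) ((j == e) : nat))%N = (t <= e)%N.
Proof.
move=> He.
have -> : (\sum_(t <= j < N) ((j == e) : nat) = \sum_(t <= j < N | j == e) 1)%N.
  by rewrite [RHS]big_mkcond; apply: eq_bigr => j _; case: (j == e).
by rewrite big_nat1_eq He andbT; case: (t <= e)%N.
Qed.

Lemma sum_split_delta (F : nat -> nat) e t N : (e < N)%N -> (0 < F e)%N ->
  (\sum_(t <= j < N) F j = \sum_(t <= j < N) (F j - (j == e)) + (t <= e))%N.
Proof.
move=> He Hp; rewrite -(sum_delta t He) -big_split /=.
apply: eq_bigr => j _; case: eqP => [->|_]; last by rewrite subn0 addn0.
by rewrite subnK.
Qed.

Definition PP (R : comNzRingType) (f : R -> R) (a : R)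
  (N : nat) (g : nat -> nat) : R :=
  \prod_(j < N) (iter j f a) ^+ (g j).

Lemma PP_factor (R : comNzRingType) (f : R -> R) (a : R)
  N g e : (e < N)%N -> (0 < g e)%N ->
  PP f a N g = iter e f a * PP f a N (fun j => g j - (j == e))%N.
Proof.
move=> He Hp; rewrite /PP (bigD1 (Ordinal He)) // [in RHS](bigD1 (Ordinal He)) //=.
rewrite eqxx mulrA -exprS subn1 prednK //; congr (_ * _).
apply: eq_bigr => j Hj; congr (_ ^+ _).
have -> : (nat_of_ord j == e) = false.
  by apply/negP => /eqP Hje; move: Hj; rewrite -val_eqE /= Hje eqxx.
by rewrite subn0.
Qed.


Lemma wm_iter (R : comNzRingType) (f : R -> R) (I : R -> Prop)
  (Hwm : forall x y, I (x * y) -> I (x * f y)) x a e d :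
  I (x * iter e f a) -> I (x * iter (e + d) f a).
Proof.
move=> H; elim: d => [|d IH]; first by rewrite addn0.
by rewrite addnS /=; apply: Hwm.
Qed.

Lemma B1 (R : comNzRingType) (f : R -> R) (I : R -> Prop)
  (Hmul : forall r x, I x -> I (r * x))
  (Hwm : forall x y, I (x * y) -> I (x * f y)) (a : R) m :
  forall N (g h : nat -> nat) r,
  (\sum_(0 <= j < N) g j)%N = m ->
  (forall t, \sum_(t <= j < N) g j <= \sum_(t <= j < N) h j)%N ->
  I (r * PP f a N g) -> I (r * PP f a N h).
Proof.
elim: m => [|m IH] N g h r Hs Hc Hr.
  have E1 : PP f a N g = 1.
    rewrite /PP big1 // => j _.
    have : (g j <= \sum_(0 <= j < N) g j)%N.
      rewrite (big_cat_nat (n := j) (leq0n _) (ltnW (ltn_ord j))) /=.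
      rewrite [X in (_ + X)%N]big_ltn ?ltn_ord //=.
      by rewrite addnCA leq_addr.
    by rewrite Hs leqn0 => /eqP ->.
  by move: Hr; rewrite E1 mulr1 mulrC => Hr; apply: Hmul.
have [j0 [Hj0 Hgj0]] : exists j, (0 <= j < N)%N /\ (0 < g j)%N.
  by apply: sum_pos_ex; rewrite Hs.
pose Pg := fun j => (j < N)%N && (0 < g j)%N.
have exg : exists j, Pg j by exists j0; rewrite /Pg Hgj0 andbT; case/andP: Hj0.
have ubg : forall j, Pg j -> (j <= N)%N by move=> j /andP [Hj _]; exact: ltnW.
case: (ex_maxnP exg ubg) => e /andP [He Hge] Hmaxe.
have Hzg : forall t, (e < t)%N -> (\sum_(t <= j < N) g j = 0)%N.
  move=> t Ht; apply: sum_zero_above => j /andP [Htj HjN].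
  apply/eqP; rewrite -leqn0 leqNgt; apply/negP => Hp.
  have := Hmaxe j; rewrite /Pg HjN Hp => /(_ isT).
  by rewrite leqNgt (leq_trans Ht Htj).
have [j1 [Hj1 Hhj1]] : exists j, (e <= j < N)%N /\ (0 < h j)%N.
  apply: sum_pos_ex; apply: leq_trans (Hc e).
  by rewrite (sum_split_delta _ He Hge) leqnn addn1.
pose Ph := fun j => (j < N)%N && (0 < h j)%N.
have exh : exists j, Ph j by exists j1; rewrite /Ph Hhj1 andbT; case/andP: Hj1.
have ubh : forall j, Ph j -> (j <= N)%N by move=> j /andP [Hj _]; exact: ltnW.
case: (ex_maxnP exh ubh) => e' /andP [He' Hhe'] Hmaxe'.
have Hee' : (e <= e')%N.
  case/andP: Hj1 => Hej1 Hj1N; apply: leq_trans Hej1 _; apply: Hmaxe'.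
  by rewrite /Ph Hj1N Hhj1.
move: Hr; rewrite (PP_factor _ _ He Hge) (PP_factor _ _ He' Hhe') mulrA => Hr.
have Hr' := IH N _ (fun j => h j - (j == e'))%N _ _ _ Hr.
have := wm_iter Hwm (x := r * PP f a N (fun j => h j - (j == e'))%N) (a := a)
  (e := e) (e' - e).
rewrite subnKC // => H; rewrite mulrCA mulrC.
apply: H; rewrite mulrAC; apply: Hr'.
- move: Hs; rewrite (sum_split_delta _ He Hge) addn1; by case.
- move=> t; have := Hc t.
  rewrite (sum_split_delta _ He Hge) (sum_split_delta _ He' Hhe').
  case: (leqP t e) => Hte.
    by rewrite (leq_trans Hte Hee') leq_add2r.
  move=> _; have := Hzg t Hte.
  by rewrite (sum_split_delta _ He Hge) (leqNgt t e) Hte addn0 => ->.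
Qed.

Lemma PP_widen (R : comNzRingType) (f : R -> R) (a : R) N M g :
  (N <= M)%N -> (forall j, (N <= j)%N -> g j = 0%N) -> PP f a M g = PP f a N g.
Proof.
move=> HNM Hg; rewrite /PP -!(big_mkord xpredT (fun j => iter j f a ^+ g j)).
rewrite (big_cat_nat (leq0n N) HNM) /=.
have -> : \prod_(N <= j < M) iter j f a ^+ g j = 1.
  by rewrite big_nat_cond big1 // => j /andP [/andP [Hj _] _]; rewrite Hg // expr0.
by rewrite mulr1.
Qed.

Lemma sum_widen (g : nat -> nat) t N M : (N <= M)%N ->
  (forall j, (N <= j)%N -> g j = 0%N) ->
  (\sum_(t <= j < M) g j = \sum_(t <= j < N) g j)%N.
Proof.
move=> HNM Hg; case: (leqP t N) => Ht.
  rewrite (big_cat_nat Ht HNM) /=.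
  have -> : (\sum_(N <= j < M) g j = 0)%N.
    by apply: sum_zero_above => j /andP [Hj _]; exact: Hg.
  by rewrite addn0.
rewrite [RHS]big_geq; last exact: ltnW.
apply: sum_zero_above => j /andP [Hj _].
by apply: Hg; apply: leq_trans Hj; apply: ltnW.
Qed.

Lemma C1 (R : comNzRingType) (f : R -> R) (I : R -> Prop)
  (Hmul : forall r x, I x -> I (r * x))
  (Hwm : forall x y, I (x * y) -> I (x * f y)) (a : R) (p q : seq nat) r :
  Rp p q -> I (r * PP f a (size p) (nth 0%N p)) -> I (r * PP f a (size q) (nth 0%N q)).
Proof.
move=> HR; set N := maxn (size p) (size q).
have Hp : forall j, (size p <= j)%N -> nth 0%N p j = 0%N by move=> j; apply: nth_default.
have Hq : forall j, (size q <= j)%N -> nth 0%N q j = 0%N by move=> j; apply: nth_default.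
rewrite -(PP_widen _ _ (leq_maxl (size p) (size q)) Hp).
rewrite -(PP_widen _ _ (leq_maxr (size p) (size q)) Hq).
apply: (B1 Hmul Hwm (erefl _)) => t.
rewrite (sum_widen _ (leq_maxl (size p) (size q)) Hp).
rewrite (sum_widen _ (leq_maxr (size p) (size q)) Hq).
exact: HR.
Qed.

Lemma prod_lift (R : comNzRingType) (I : R -> Prop) (J : Type) (l : seq J)
  (A B : J -> R) :
  (forall i r, I (r * A i) -> I (r * B i)) ->
  forall r, I (r * \prod_(i <- l) A i) -> I (r * \prod_(i <- l) B i).
Proof.
move=> HAB; elim: l => [|x l IH] r; first by rewrite !big_nil.
rewrite !big_cons => H.
rewrite mulrA; apply: IH; rewrite mulrAC; apply: HAB.
by rewrite mulrAC -mulrA.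
Qed.

Lemma in_map_In (T : Type) (U : eqType) (g : T -> U) (l : seq T) (f : U) :
  f \in map g l -> exists u, List.In u l /\ f = g u.
Proof.
elim: l => [|x l IH] //=; rewrite in_cons => /orP [/eqP ->|H].
  by exists x; split => //; left.
by case: (IH H) => u [Hu ->]; exists u; split => //; right.
Qed.

Lemma In_in_map (T : Type) (U : eqType) (g : T -> U) (l : seq T) u :
  List.In u l -> g u \in map g l.
Proof.
elim: l => [|x l IH] //= [->|H]; rewrite in_cons; first by rewrite eqxx.
by rewrite IH ?orbT.
Qed.

Lemma sexp_PP (k : fieldType) (s : {rmorphism k -> k}) (n : nat) (a : dpoly k n)
  (p : {poly nat}) :
  sexp s a p = PP (dsigma s) a (size p) (nth 0%N (polyseq p)).
Proof. by []. Qed.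

Lemma mono_step (k : fieldType) (s : {rmorphism k -> k}) (n : nat)
  (I : dpoly k n -> Prop) (HI : is_wm_sigma_ideal s I)
  (u v : 'I_n -> {poly nat}) :
  (forall i, Rp (polyseq (u i)) (polyseq (v i))) ->
  forall r, I (r * dmonomial s u) -> I (r * dmonomial s v).
Proof.
case: HI => [[_ _ Hmul] _ Hwm] Huv r.
rewrite /dmonomial; apply: prod_lift => i r' H.
rewrite sexp_PP; rewrite sexp_PP in H.
exact: (C1 Hmul Hwm (Huv i) H).
Qed.

Unset Implicit Arguments.
Set Strict Implicit.

Theorem theorem4p10 (k : fieldType) (s : {rmorphism k -> k})
  (hchar : [pchar k] =i pred0) (n : nat)
  (S : ('I_n -> {poly nat}) -> Prop) :
  exists F : seq (dpoly k n),
    (forall f, f \in F -> is_dmonomial s f) /\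
    (forall a,
       wm_closure s (fun f => exists2 u, S u & f = dmonomial s u) a <->
       wm_closure s (fun f => f \in F) a).
Proof.
pose le := fun u v : 'I_n -> {poly nat} =>
  forall i, i \in enum 'I_n -> Rp (polyseq (u i)) (polyseq (v i)).
have Hw : wqo le.
  apply: (wqo_all (R := fun i (u v : 'I_n -> {poly nat}) =>
                          Rp (polyseq (u i)) (polyseq (v i)))) => i.
    exact: (wqo_pullback (fun u : 'I_n -> {poly nat} => polyseq (u i)) wqo_Rp).
  by move=> a b c; apply: trans_Rp.
have [l0 [HS Hb]] := wqo_basis (fun _ => 0) Hw S.
exists (map (dmonomial s) l0); split.
  by move=> f /in_map_In [u [_ ->]]; exists u.
move=> a; split.
- move=> H I HI HF; apply: H => // f [u Su ->].
  have [u0 [Hu0 Hle]] := Hb u Su.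
  have := HF _ (In_in_map (dmonomial s) Hu0).
  rewrite -[dmonomial s u0]mul1r -[dmonomial s u]mul1r.
  apply: (mono_step HI) => i; apply: Hle; exact: mem_enum.
- move=> H I HI HF; apply: H => // f /in_map_In [u [Hu ->]].
  by apply: HF; exists u => //; apply: HS.
Qed.
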